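(* Let $u=a_1\cdots a_n$ be the input of the following algorithm and let $P_i$ be the set of positions it computes for position $i$. Algorithm: for all $a\in A$ set $n_a\gets 1$, $Q_a\gets\emptyset$; for $i=1,\ldots,n$ with $a_i=c$: set $x_i\gets n_c$, $P_i\gets Q_c$; then $n_c\gets n_c+1$, $Q_c\gets\{i\}$; then for all $a\in A$: if $n_c<n_a$ set $n_a\gets n_c$, $Q_a\gets Q_c$, else if $n_c=n_a$ set $Q_a\gets Q_a\cup Q_c$. Then, if $i$ is a $c$-position, $R^u_i = \bigcup_{j \in P_i} R^u_j \, \mathsf{X}_c$, with the convention $\bigcup_{j\in\emptyset} R^u_j\,\mathsf{X}_c=\{\mathsf{X}_c\}$.
   Context: $A$ is a finite alphabet. An $\mathsf{X}$-ranker is a nonempty word over $\{\mathsf{X}_a : a\in A\}$, evaluated on a word $w$ by: $\mathsf{X}_a(w)$ is the smallest $a$-position of $w$ and $r\mathsf{X}_a(w)$ is the smallest $a$-position greater than $r(w)$ (possibly undefined). For a position $i$ of $u$, $x_i$ is the length of a shortest $\mathsf{X}$-ranker reaching $i$, and $R^u_i$ is the set of $\mathsf{X}$-rankers $r$ with $r(u)=i$ and $|r|=x_i$. *)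

(* Defs.v *)
(* Positions of a word are 1-indexed, as in the paper. *)
From mathcomp Require Import all_boot.
Set Implicit Arguments. Unset Strict Implicit. Unset Printing Implicit Defensive.

Section Rankers.
Variable A : finType.

(* [next w a k] : the smallest a-position of w (1-indexed) strictly greater
   than k (k = 0 means "no lower bound"), if any. *)
Definition next (w : seq A) (a : A) (k : nat) : option nat :=
  let s := drop k w in
  let j := find (pred1 a) s in
  if j < size s then Some (k + j + 1) else None.

(* An X-ranker X_{a1} X_{a2} ... X_{am} is represented by the word [:: a1; ...; am];
   it is evaluated left to right: X_{a1}(w), then X_{a1}X_{a2}(w), ... *)
Definition eval_ranker (w : seq A) (r : seq A) : option nat :=
  foldl (fun o a => obind (next w a) o) (Some 0) r.

Definition Rset (u : seq A) (i : nat) (r : seq A) : Prop :=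
  [/\ r != [::], eval_ranker u r = Some i &
      forall r', r' != [::] -> eval_ranker u r' = Some i -> size r <= size r'].

(* The algorithm: state n_a (n : A -> nat) and Q_a (Q : A -> seq nat, sets as
   lists); i is the current (1-indexed) position; outputs the list of the P_i. *)
Fixpoint alg_run (n : A -> nat) (Q : A -> seq nat) (i : nat) (w : seq A)
  : seq (seq nat) :=
  match w with
  | [::] => [::]
  | c :: w' =>
      let P := Q c in
      let nc := (n c).+1 in
      let n' := fun a => if a == c then nc
                         else if nc < n a then nc else n a in
      let Q' := fun a => if a == c then [:: i]
                         else if nc < n a then [:: i]
                         else if nc == n a then Q a ++ [:: i]
                         else Q a in
      P :: alg_run n' Q' i.+1 w'
  end.

Definition algP (u : seq A) (i : nat) : seq nat :=
  nth [::] (alg_run (fun _ => 1) (fun _ => [::]) 1 u) i.-1.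

End Rankers.

(* Main.v *)
Require Import Defs.
From mathcomp Require Import all_boot zify.
Set Warnings "-notation-overridden".
Set Implicit Arguments. Unset Strict Implicit. Unset Printing Implicit Defensive.

Section S.
Variable (A : finType) (u : seq A).

Lemma eval_rcons r a : eval_ranker u (rcons r a) = obind (Defs.next u a) (eval_ranker u r).
Proof. by rewrite /eval_ranker -cats1 foldl_cat. Qed.

Lemma next_gt a k i : Defs.next u a k = Some i -> k < i.
Proof. rewrite /Defs.next; case: ifP => // _ [<-]; lia. Qed.

Lemma reach_pos r j : eval_ranker u r = Some j -> r != [::] -> 0 < j.
Proof.
case/lastP: r => [//|r a]. rewrite eval_rcons.
case: (eval_ranker u r) => //= k /next_gt; lia.
Qed.

Lemma nextP a k i : Defs.next u a k = Some i <->
  [/\ k < i, i <= size u, nth a u i.-1 = a & forall m, k < m < i -> nth a u m.-1 != a].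
Proof.
rewrite /Defs.next. set s := drop k u.
have Hs: forall t, nth a s t = nth a u (k + t) by move=> t; rewrite nth_drop.
have Hsz: size s = size u - k by rewrite size_drop.
clearbody s.
split.
- case: ifP => // Hlt [<-]. rewrite Hsz in Hlt.
  set f := find _ s in Hlt *. split; [lia|lia| |].
  + have -> : (k + f + 1).-1 = k + f by lia.
    rewrite -Hs /f. apply/eqP. apply: (nth_find a (a:=pred1 a)). by rewrite has_find Hsz.
  + move=> m Hm. have Hb : m.-1 - k < f by lia.
    have := before_find a Hb. rewrite Hs /=.
    have -> : k + (m.-1 - k) = m.-1 by lia.
    by move=> ->.
- set f := find _ s. case=> Hki Hiu Hia Hm. set t := i.-1 - k.
  have Ht: nth a s t = a by rewrite Hs; have ->: k + t = i.-1 by rewrite /t; lia.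
  have Htf: f = t.
    apply/eqP; rewrite eqn_leq; apply/andP; split.
    - rewrite leqNgt; apply/negP => H. have := before_find a H. by rewrite Ht /= eqxx.
    - rewrite leqNgt; apply/negP => H.
      have Hf: has (pred1 a) s.
        apply/hasP; exists (nth a s t); last by rewrite /= Ht.
        apply: mem_nth; rewrite Hsz /t; lia.
      have := nth_find a Hf. rewrite Hs /=.
      have := Hm (k + f).+1.
      have -> : (k + f).+1.-1 = k + f by [].
      move=> H1 H2; rewrite -/f in H2; move: H1; rewrite (eqP H2) eqxx /=. move=> H3; suff: false by []. apply: H3; rewrite /t /f in H; apply/andP; split; lia.
  rewrite Htf ifT; last by rewrite Hsz /t; lia.
  congr Some; rewrite /t; lia.
Qed.

Definition Win (a : A) k j := j <= k /\ forall m, j < m <= k -> nth a u m.-1 != a.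

Definition Inv k (n : A -> nat) (Q : A -> seq nat) := forall a,
  [/\ exists j r, [/\ Win a k j, eval_ranker u r = Some j & (size r).+1 = n a],
      forall j r, Win a k j -> eval_ranker u r = Some j -> n a <= (size r).+1 &
      forall j, j \in Q a <-> [/\ 0 < j, Win a k j & exists r, eval_ranker u r = Some j /\ (size r).+1 = n a]].

Definition Concl i (P : seq nat) := forall c, nth c u i.-1 = c -> forall r,
    Rset u i r <->
    ((P = [::] /\ r = [:: c]) \/
     (exists2 j, j \in P & exists2 r', Rset u j r' & r = rcons r' c)).

Lemma rcons_nn (s : seq A) x : rcons s x != [::].
Proof. by case: s. Qed.

Lemma reach_next k c r : k < size u -> nth c u k = c ->
  (eval_ranker u r = Some k.+1 <->
   exists r' j, [/\ r = rcons r' c, eval_ranker u r' = Some j & Win c k j]).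
Proof.
move=> Hk Hc; split.
- case/lastP: r => [//|r' a]. rewrite eval_rcons.
  case E: (eval_ranker u r') => [j|] //= /nextP [H1 H2 H3 H4].
  have ac : a = c by rewrite -H3 /= (set_nth_default c) // Hc.
  subst a. by exists r', j; split => //; split => //; lia.
- case=> r' [j [-> E [W1 W2]]]. rewrite eval_rcons E /=. apply/nextP.
  split => //.
Qed.

Lemma inv0 : Inv 0 (fun _ => 1) (fun _ => [::]).
Proof.
move=> a; split.
- exists 0, [::]; split => //. split => // m; lia.
- by [].
- move=> j; rewrite in_nil; split => // [[H [H1 _] _]]; lia.
Qed.

Lemma xi k n Q c : k < size u -> nth c u k = c -> Inv k n Q ->
  (exists r, eval_ranker u r = Some k.+1 /\ size r = n c) /\
  (forall r, eval_ranker u r = Some k.+1 -> n c <= size r).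
Proof.
move=> Hk Hc HI. case: (HI c) => [[j0 [r0 [W0 E0 S0]]] HB HC]. split.
- exists (rcons r0 c); split; last by rewrite size_rcons.
  by apply/(reach_next _ Hk Hc); exists r0, j0.
- move=> r1 /(reach_next _ Hk Hc) [r2 [j2 [-> E2 W2]]]; rewrite size_rcons.
  exact: HB W2 E2.
Qed.

Lemma step_concl k n Q c : k < size u -> nth c u k = c -> Inv k n Q -> Concl k.+1 (Q c).
Proof.
move=> Hk Hc HI c' Hc' r.
have ec : c' = c by rewrite -Hc' /= (set_nth_default c) // Hc.
subst c'.
case: (HI c) => [[j0 [r0 [W0 E0 S0]]] HB HC].
have [[r0' [X1 X1s]] X2] := xi Hk Hc HI.
split.
- case=> Hne Er Hmin.
  have Er0 := Er. move: Er0 => /(reach_next _ Hk Hc) [r' [j [Er' E' W']]]. subst r.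
  have H2 := X2 _ Er.
  have H3 := fun h => Hmin _ h X1.
  have Hx : r0' != [::].
    apply/negP => /eqP Hr; subst r0'. by move: X1.
  have H4 := H3 Hx. rewrite size_rcons X1s in H4. rewrite size_rcons in H2.
  have H5 := HB _ _ W' E'.
  clear H3. case: r' Hne Er E' H4 H2 H5 Hmin => [|x s] Hne Er E' H4 H2 H5 Hmin.
  + left; split => //.
    case HQ: (Q c) => [|y q] //.
    have : y \in Q c by rewrite HQ inE eqxx.
    case/HC => Hy _ [r1 [E1 S1]].
    case: r1 E1 S1 => [|z r1] E1 S1.
    * by case: E1 => E1; rewrite -E1 in Hy.
    * move: S1 H4 => /= S1 H4. exfalso; move: H2 => /= H2; lia.
  + right. exists j.
    * apply/HC; split.
      -- exact: reach_pos E' isT.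
      -- exact: W'.
      -- exists (x :: s); split => //. lia.
    * exists (x :: s) => //. split => // r'' Hr'' E''.
      have := Hmin (rcons r'' c) (rcons_nn _ _).
      rewrite !size_rcons ltnS; apply.
      by apply/(reach_next _ Hk Hc); exists r'', j.
- case.
  + case=> HQ ->. split => //.
    * apply/(reach_next _ Hk Hc); exists [::], 0; split => //.
      case: j0 W0 E0 S0 => [//|j0] W0 E0 S0.
      have : j0.+1 \in Q c. apply/HC; split => //. by exists r0.
      by rewrite HQ.
    * by move=> r'' Hr'' _; case: r'' Hr''.
  + case=> j HjQ [r' [Hne' E' Hmin'] ->]. case/HC: HjQ => [Hj Wj [r1 [E1 S1]]].
    split; first exact: rcons_nn.
    * by apply/(reach_next _ Hk Hc); exists r', j.
    * move=> r'' _ E''. have H1 := X2 _ E''.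
      have Hr1 : r1 != [::] by apply/negP => /eqP Hr; subst r1; case: E1 => E1; rewrite -E1 in Hj.
      have := Hmin' r1 Hr1 E1. rewrite size_rcons. move: H1 S1; move: (size r'') (size r1) (size r') (n c) => ? ? ? ?; lia.
Qed.

Lemma WinS_c k c j : k < size u -> nth c u k = c -> (Win c k.+1 j <-> j = k.+1).
Proof.
move=> Hk Hc; split.
- case=> Hj Hm. case: (ltnP k j) => H; first by lia.
  have := Hm k.+1. rewrite /= Hc eqxx. move=> H1. suff: false by []. apply: H1. lia.
- move=> ->; split => // m; lia.
Qed.

Lemma WinS_a k c a j : k < size u -> nth c u k = c -> a != c ->
  (Win a k.+1 j <-> j = k.+1 \/ Win a k j).
Proof.
move=> Hk Hc Hac.
have Ha : nth a u k != a by rewrite (set_nth_default c) // Hc eq_sym.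
split.
- case=> Hj Hm. case: (ltnP k j) => H; first by left; lia.
  right; split => // m Hm'; apply: Hm; lia.
- case=> [->|[Hj Hm]]; first by split => // m; lia.
  split; first by lia.
  move=> m Hm'. case: (eqVneq m k.+1) => [->|Hne] //.
  apply: Hm. lia.
Qed.

Lemma step_inv k n Q c : k < size u -> nth c u k = c -> Inv k n Q ->
  Inv k.+1 (fun a => if a == c then (n c).+1 else if (n c).+1 < n a then (n c).+1 else n a)
           (fun a => if a == c then [:: k.+1] else if (n c).+1 < n a then [:: k.+1]
                     else if (n c).+1 == n a then Q a ++ [:: k.+1] else Q a).
Proof.
move=> Hk Hc HI.
have [[r1 [X1 X1s]] X2] := xi Hk Hc HI.
move=> a /=. case: (eqVneq a c) => [->|Hac].
- split.
  + exists k.+1, r1; split => //; last by rewrite X1s.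
    by apply/(WinS_c _ Hk Hc).
  + move=> j r /(WinS_c _ Hk Hc) -> E. have := X2 _ E. by [].
  + move=> j; rewrite inE; split.
    * move/eqP ->; split => //; first by apply/(WinS_c _ Hk Hc).
      by exists r1; rewrite X1s.
    * by case=> _ /(WinS_c _ Hk Hc) ->.
- case: (HI a) => [[j0 [r0 [W0 E0 S0]]] HB HC].
  have WA := WinS_a _ Hk Hc Hac.
  case: ltnP => H1.
  + split.
    * exists k.+1, r1; split => //; last by rewrite X1s.
      by apply/WA; left.
    * move=> j r /WA [->|W] E.
      -- have := X2 _ E. by [].
      -- have := HB _ _ W E. lia.
    * move=> j; rewrite inE; split.
      -- move/eqP ->; split => //; first by apply/WA; left.
         by exists r1; rewrite X1s.
      -- case=> Hj /WA [->|W] [r [E S]]; first by rewrite eqxx.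
         have := HB _ _ W E. move: S H1; move: (size r) (n a) (n c) => ? ? ?; lia.
  + case: eqVneq => H2.
    * split.
      -- exists j0, r0; split => //. by apply/WA; right.
      -- move=> j r /WA [->|W] E; last exact: HB W E.
         have := X2 _ E. rewrite -H2. by [].
      -- move=> j; rewrite mem_cat inE; split.
         ++ case/orP => [/HC [Hj W Ex]|/eqP ->].
            ** by split => //; apply/WA; right.
            ** split => //; first by apply/WA; left.
               by exists r1; rewrite X1s.
         ++ case=> Hj /WA [->|W] Ex; first by rewrite eqxx orbT.
            by apply/orP; left; apply/HC.
    * split.
      -- exists j0, r0; split => //. by apply/WA; right.
      -- move=> j r /WA [->|W] E; last exact: HB W E.
         have := X2 _ E. move: H1 H2; move: (size r) (n a) (n c) => ? ? ?; lia.
      -- move=> j; split.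
         ++ case/HC => Hj W Ex. by split => //; apply/WA; right.
         ++ case=> Hj /WA [->|W] Ex; last by apply/HC.
            case: Ex => r [E S]. have := X2 _ E.
            move: S H1 H2; move: (size r) (n a) (n c) => ? ? ?; lia.
Qed.

Lemma run_ok w : forall k n Q, Inv k n Q -> drop k u = w -> forall t, t < size w ->
  Concl (k + t).+1 (nth [::] (alg_run n Q k.+1 w) t).
Proof.
elim: w => [|c w IH] k n Q HI Hd [|t] //= Ht.
- have Hk : k < size u by move: (congr1 size Hd); rewrite size_drop /=; lia.
  have Hc : nth c u k = c by move: (congr1 (fun s => nth c s 0) Hd); rewrite nth_drop addn0.
  rewrite addn0. exact: step_concl Hk Hc HI.
- have Hk : k < size u by move: (congr1 size Hd); rewrite size_drop /=; lia.
  have Hc : nth c u k = c by move: (congr1 (fun s => nth c s 0) Hd); rewrite nth_drop addn0.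
  have Hd' : drop k.+1 u = w by rewrite -[k.+1]addn1 addnC -drop_drop Hd /= drop0.
  have := IH k.+1 _ _ (step_inv Hk Hc HI) Hd' t Ht.
  by rewrite addSnnS.
Qed.
End S.

Theorem proposition21 (A : finType) (u : seq A) (i : nat) (c : A) :
  0 < i <= size u -> nth c u i.-1 = c ->
  forall r : seq A,
    Rset u i r <->
    ((algP u i = [::] /\ r = [:: c]) \/
     (exists2 j, j \in algP u i & exists2 r', Rset u j r' & r = rcons r' c)).
Proof.
move=> /andP [Hi Hiu] Hc r.
have Ht : i.-1 < size u by lia.
have := run_ok (inv0 u) (drop0 u) Ht.
rewrite add0n prednK // => H. exact: H.
Qed.
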